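(* For every topological group $X$ endowed with its left coarse structure, $\mathcal D_<(X)\subset\mathcal S(X)$.
   Context: A coarse space is a pair $(X,\mathcal E)$ of a set and a family of entourages $\varepsilon\subset X\times X$ that contain the diagonal, are symmetric, are (up to containment) closed under composition $\delta\circ\varepsilon=\{(x,z):\exists y\,(x,y)\in\varepsilon,(y,z)\in\delta\}$, and such that any symmetric $\delta$ with $\Delta_X\subset\delta\subset\varepsilon\in\mathcal E$ is in $\mathcal E$. The left coarse structure of a topological group $G$ is the coarse structure with base $\{\{(x,y)\in G^2:x\in yK\}\}$, $K=K^{-1}$ ranging over compact symmetric subsets of $G$ containing the identity. Subsets carry the subspace coarse structure $\{\varepsilon\cap A^2\}$. $B(x,\varepsilon)=\{y:(x,y)\in\varepsilon\}$, $B(A,\varepsilon)=\bigcup_{a\in A}B(a,\varepsilon)$, $\operatorname{mesh}(\mathcal U)=\bigcup_{U\in\mathcal U}U\times U$. $\operatorname{asdim}(X)$ is the least $n\in\omega$ such that for every $\varepsilon\in\mathcal E$ there is a cover $\mathcal U$ of $X$ with $\operatorname{mesh}(\mathcal U)\subset\delta$ for some $\delta\in\mathcal E$ and each $B(x,\varepsilon)$ meeting at most $n+1$ members of $\mathcal U$ ($\infty$ if none). $A$ is large if $B(A,\varepsilon)=X$ for some $\varepsilon\in\mathcal E$; small if $L\setminus A$ is large for every large $L$. $\mathcal S(X)$ is the family of small subsets, $\mathcal D_<(X)=\{A\subset X:\operatorname{asdim}(A)<\operatorname{asdim}(X)\}$. *)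

(* Defs.v *)
From HB Require Import structures.
From mathcomp Require Import all_boot all_order all_algebra.
From mathcomp Require Import all_classical all_reals all_analysis.
Set Implicit Arguments. Unset Strict Implicit. Unset Printing Implicit Defensive.
Local Open Scope classical_set_scope.
Local Open Scope card_scope.

(** No separation axiom is assumed. *)
Definition is_topological_group (T : topologicalType)
    (mul : T -> T -> T) (inv : T -> T) (one : T) : Prop :=
  [/\ (forall x y z, mul x (mul y z) = mul (mul x y) z),
      (forall x, mul one x = x),
      (forall x, mul (inv x) x = one),
      continuous (fun p : T * T => mul p.1 p.2) &
      continuous inv].

Definition left_coarse_structure (T : topologicalType)
    (mul : T -> T -> T) (inv : T -> T) (one : T) : set (set (T * T)) :=
  [set eps | [/\ (forall x, eps (x, x)),
     (forall x y, eps (x, y) -> eps (y, x)) &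
     exists K : set T, [/\ compact K, K one, (forall k, K k -> K (inv k)) &
       (forall x y, eps (x, y) -> exists2 k, K k & x = mul y k)]]].

Section Coarse.
Context {X : Type}.
Implicit Types (E : set (set (X * X))) (A L : set X) (eps : set (X * X)).

Definition cball eps (x : X) : set X := [set y | eps (x, y)].
Definition cballS eps A : set X := \bigcup_(a in A) cball eps a.

Definition mesh (U : set (set X)) : set (X * X) :=
  \bigcup_(V in U) (V `*` V).

Definition sub_ent E A : set (set (X * X)) :=
  [set eps `&` (A `*` A) | eps in E].

Definition asdim_le E A (n : nat) : Prop :=
  forall eps, sub_ent E A eps ->
    exists U : set (set X),
      [/\ (forall V, U V -> V `<=` A),
          \bigcup_(V in U) V = A,
          (exists2 del, sub_ent E A del & mesh U `<=` del) &
          (forall x, A x ->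
             [set V | U V /\ V `&` cball eps x !=set0] #<= `I_(n.+1))].

(** asdim(A) as an element of nat + {oo} (None = oo): least n with asdim_le *)
Definition asdim E A : option nat :=
  match pselect (exists n, asdim_le E A n) with
  | left h =>
      Some (ex_minn (P := fun n => `[< asdim_le E A n >])
             (let: ex_intro n hn := h in ex_intro _ n (asboolT hn)))
  | right _ => None
  end.

Definition olt (a b : option nat) : Prop :=
  match a, b with
  | Some m, Some n => (m < n)%N
  | Some _, None => True
  | None, _ => False
  end.

Definition large E A : Prop :=
  exists2 eps, E eps & cballS eps A = setT.
Definition small E A : Prop :=
  forall L, large E L -> large E (L `\` A).

Definition small_sets E : set (set X) := [set A | small E A].
Definition D_lt E : set (set X) := [set A | olt (asdim E A) (asdim E setT)].

End Coarse.

(* Main.v *)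
Require Import Defs.
From mathcomp Require Import all_boot all_order all_algebra.
From mathcomp Require Import all_classical all_reals all_analysis.
From Stdlib Require List.
From mathcomp Require Import finmap.
Set Implicit Arguments. Unset Strict Implicit. Unset Printing Implicit Defensive.
Local Open Scope classical_set_scope.
Local Open Scope card_scope.
Definition ultra_props (I : Type) (U : set (set I)) :=
  [/\ ~ U set0, U setT, (forall P Q, U P -> U Q -> U (P `&` Q)),
      (forall P Q, P `<=` Q -> U P -> U Q) & (forall P, U P \/ U (~` P))].

Lemma ultra_exists (T : Type) : exists U : set (set (seq T)),
  ultra_props U /\ forall p, U [set s | List.In p s].
Proof.
pose F := filter_from setT (fun S : seq T => [set s | forall p, List.In p S -> List.In p s]).
have FF : Filter F.
  apply: filter_fromT_filter; first by exists [::].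
  move=> S1 S2; exists (S1 ++ S2) => s /= H; split => p Hp; apply: H;
  apply/List.in_app_iff; by [left|right].
have PF : ProperFilter F.
  apply: filter_from_proper => S _; exists S => p; done.
have [U [UU FU]] := ultraFilterLemma PF.
exists U; split; last first.
  move=> p; apply: FU; exists [:: p] => // s /=; apply; by left.
split.
- exact: filter_not_empty.
- exact: filterT.
- by move=> P Q; apply: filterI.
- by move=> P Q; apply: filterS.
- by move=> P; apply: in_ultra_setVsetC.
Qed.

Lemma ultra_pick (I : Type) (U : set (set I)) (Q : nat -> set I) k :
  ultra_props U -> U [set i | exists2 j, (j < k)%N & Q j i] ->
  exists2 j, (j < k)%N & U (Q j).
Proof.
case=> U0 UT UI US UC; elim: k => [|k IH] H.
  by exfalso; apply: U0; apply: US H => i [].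
case: (UC (Q k)) => HQ; first by exists k.
have [j jk Uj] : exists2 j, (j < k)%N & U (Q j).
  apply: IH; apply: US (UI _ _ H HQ) => i [[j jk Qj] nQ].
  exists j => //; rewrite ltnS leq_eqVlt in jk; case/orP: jk => // /eqP ej.
  by exfalso; apply: nQ; rewrite -ej.
by exists j => //; apply: ltnW.
Qed.

Lemma ultra_all (I : Type) (U : set (set I)) (Q : nat -> set I) k :
  ultra_props U -> (forall j, (j < k)%N -> U (Q j)) ->
  U [set i | forall j, (j < k)%N -> Q j i].
Proof.
case=> U0 UT UI US UC; elim: k => [|k IH] H.
  by apply: US UT => i _ j.
have := UI _ _ (IH (fun j jk => H j (ltnW jk))) (H k (ltnSn k)).
apply: US => i [H1 H2] j; rewrite ltnS leq_eqVlt => /orP[/eqP->//|]; apply: H1.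
Qed.

Lemma card_le_fset (T : choiceType) (S : set T) n :
  (forall B : {fset T}, [set` B] `<=` S -> (#|` B| <= n)%N) -> S #<= `I_n.
Proof.
move=> H.
have [fin|inf] := pselect (finite_set S); last first.
  have [B BS Bn] := infinite_set_fset n.+1 inf.
  by have := H B BS; rewrite leqNgt Bn.
have [k Sk] := fin.
have := H (fset_set S); rewrite fset_setK // => /(_ (subset_refl _)).
rewrite (card_fset_set Sk) => /(_ (fun x y => y)) kn.
have [Sk1 _] := (card_eqPle S `I_k).1 Sk.
have kn' : `I_k #<= `I_n by rewrite (card_le_II k n).
exact: (card_le_trans Sk1 kn').
Qed.

Lemma card_le_inj (T : Type) (S : set T) n (g : nat -> T) k :
  S #<= `I_n -> {in `I_k &, injective g} -> (forall j, (j < k)%N -> S (g j)) ->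
  (k <= n)%N.
Proof.
move=> Sn ginj gS.
have h1 : g @` `I_k #<= `I_n.
  apply: card_le_trans Sn; apply: subset_card_le => _ [j jk <-]; exact: gS.
rewrite (card_le_eql (inj_card_eq ginj)) in h1.
by rewrite (card_le_II k n) in h1.
Qed.
Lemma grp_r1 (G : topologicalType) (mul : G -> G -> G) inv one :
  is_topological_group mul inv one ->
  [/\ forall x, mul x one = x, forall x, mul x (inv x) = one,
      forall x, inv (inv x) = x & forall x y, mul (inv x) (mul x y) = y].
Proof.
case=> A L I _ _.
have cancel: forall x y, mul (inv x) (mul x y) = y by move=> x y; rewrite A I L.
have rinv: forall x, mul x (inv x) = one.
  move=> x.
  have e1 : mul x (inv x) = mul (inv (inv x)) (mul (inv x) (mul x (inv x))).
    by rewrite cancel.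
  by rewrite e1 (A (inv x) x) I L I.
have r1 : forall x, mul x one = x by move=> x; rewrite -(I x) A rinv L.
split=> // x.
have e2 : inv (inv x) = mul (inv (inv x)) (mul (inv x) x) by rewrite I r1.
by rewrite e2 A I L.
Qed.

Definition gprod (G : Type) (mul : G -> G -> G) (C D : set G) : set G :=
  (fun p : G * G => mul p.1 p.2) @` (C `*` D).

Lemma gprodI (G : Type) (mul : G -> G -> G) (C D : set G) c d :
  C c -> D d -> gprod mul C D (mul c d).
Proof. by move=> Cc Dd; exists (c, d). Qed.

Lemma gprod_compact (G : topologicalType) (mul : G -> G -> G) inv one C D :
  is_topological_group mul inv one -> compact C -> compact D ->
  compact (gprod mul C D).
Proof.
case=> _ _ _ cm _ cC cD; apply: continuous_compact.
  exact: continuous_subspaceT.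
exact: compact_setX.
Qed.

Definition symc (G : Type) (inv : G -> G) (one : G) (C : set G) : set G :=
  C `|` inv @` C `|` [set one].

Lemma symc_compact (G : topologicalType) (mul : G -> G -> G) inv one C :
  is_topological_group mul inv one -> compact C -> compact (symc inv one C).
Proof.
move=> H cC; have [_ _ _ _ ci] := H.
apply: compactU; last exact: compact_set1.
apply: compactU => //; apply: continuous_compact => //.
exact: continuous_subspaceT.
Qed.

Lemma symc_sym (G : topologicalType) (mul : G -> G -> G) inv one C :
  is_topological_group mul inv one ->
  forall k, symc inv one C k -> symc inv one C (inv k).
Proof.
move=> H; have [r1 ri ii _] := grp_r1 H.
have [_ _ I _ _] := H.
move=> k [[Ck|[c Cc <-]]|->].
- by left; right; exists k.
- by left; left; rewrite ii.
- by right; rewrite -[inv one]r1 I.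
Qed.

Lemma symc_one (G : Type) (inv : G -> G) one C : symc inv one C one.
Proof. by right. Qed.

Lemma symc_sub (G : Type) (inv : G -> G) one C : C `<=` symc inv one C.
Proof. by move=> x Cx; left; left. Qed.

Definition entK (G : Type) (mul : G -> G -> G) (K : set G) : set (G * G) :=
  [set pq | exists2 k, K k & pq.1 = mul pq.2 k].

Lemma entK_E (G : topologicalType) (mul : G -> G -> G) inv one K :
  is_topological_group mul inv one -> compact K -> K one ->
  (forall k, K k -> K (inv k)) ->
  left_coarse_structure mul inv one (entK mul K).
Proof.
move=> H cK K1 Ks; have [r1 ri ii _] := grp_r1 H; have [A _ _ _ _] := H.
split.
- by move=> x; exists one => //; rewrite r1.
- move=> x y [k Kk /= ->]; exists (inv k); first exact: Ks.
  by rewrite /= -A ri r1.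
- by exists K; split => // x y [k Kk /= ->]; exists k.
Qed.

Lemma E_sub (G : topologicalType) (mul : G -> G -> G) inv one eps :
  left_coarse_structure mul inv one eps ->
  exists K, [/\ compact K, K one, (forall k, K k -> K (inv k)) &
    eps `<=` entK mul K].
Proof.
case=> _ _ [K [cK K1 Ks H]]; exists K; split => // -[x y] /H [k Kk ->].
by exists k.
Qed.

Lemma nonsmall_translate (G : topologicalType) (mul : G -> G -> G) inv one
  (A L : set G) eps0 K0 :
  is_topological_group mul inv one ->
  compact K0 -> (forall k, K0 k -> K0 (inv k)) -> eps0 `<=` entK mul K0 ->
  cballS eps0 L = setT ->
  ~ large (left_coarse_structure mul inv one) (L `\` A) ->
  forall C, compact C -> exists x, forall c, C c ->
    exists a k, [/\ A a, K0 k & mul x c = mul a k].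
Proof.
move=> H cK0 K0s e0K Lbig nlarge C cC.
have [r1 ri ii _] := grp_r1 H; have [As _ _ _ _] := H.
pose K := symc inv one (gprod mul C K0).
have EK : left_coarse_structure mul inv one (entK mul K).
  apply: entK_E => //; rewrite /K.
  - by apply: (symc_compact H); apply: (gprod_compact H).
  - exact: symc_one.
  - exact: (symc_sym H).
have [x nx] : exists x, ~ cballS (entK mul K) (L `\` A) x.
  apply: contrapT => hx; apply: nlarge; exists (entK mul K) => //.
  apply/seteqP; split => // y _; apply: contrapT => ny; apply: hx; by exists y.
exists x => c Cc.
have : cballS eps0 L (mul x c) by rewrite Lbig.
case=> l Ll /e0K [k0 K0k0 /= el].
have Al : A l.
  apply: contrapT => nAl; apply: nx; exists l => //.
  exists (mul c k0); first by apply: symc_sub; apply: gprodI.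
  by rewrite /= el As.
exists l, (inv k0); split => //; first exact: K0s.
by rewrite el -As ri r1.
Qed.

Lemma alg1 (G : topologicalType) (mul : G -> G -> G) inv one :
  is_topological_group mul inv one ->
  forall xi p q ap aq k1 k2 kk, mul xi p = mul ap k1 -> mul xi q = mul aq k2 ->
  p = mul q kk -> ap = mul aq (mul k2 (mul kk (inv k1))).
Proof.
move=> H; have [r1 ri ii cancel] := grp_r1 H; have [As L1 I _ _] := H.
move=> xi p q ap aq k1 k2 kk ep eq epk.
have e3 : ap = mul (mul xi p) (inv k1) by rewrite ep -As ri r1.
by rewrite e3 epk As eq -!As.
Qed.

Lemma alg2 (G : topologicalType) (mul : G -> G -> G) inv one :
  is_topological_group mul inv one ->
  forall xi p q ap aq k1 k2 d, mul xi p = mul ap k1 -> mul xi q = mul aq k2 ->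
  ap = mul aq d -> p = mul q (mul (inv k2) (mul d k1)).
Proof.
move=> H; have [r1 ri ii cancel] := grp_r1 H; have [As L1 I _ _] := H.
move=> xi p q ap aq k1 k2 d ep eq ed.
have e1 : p = mul (inv xi) (mul xi p) by rewrite cancel.
have e2 : aq = mul (mul xi q) (inv k2) by rewrite eq -As ri r1.
by rewrite e1 ep ed e2 -!As cancel.
Qed.

Definition inAK (G : Type) (mul : G -> G -> G) (A K0 : set G) (z : G) :=
  exists a k, [/\ A a, K0 k & z = mul a k].

Lemma main_glue (G : topologicalType) (mul : G -> G -> G) inv one
  (A K0 : set G) (x : seq G -> G) (U : set (set (seq G))) m :
  is_topological_group mul inv one ->
  compact K0 -> K0 one -> (forall k, K0 k -> K0 (inv k)) ->
  ultra_props U -> (forall p, U [set s | inAK mul A K0 (mul (x s) p)]) ->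
  asdim_le (left_coarse_structure mul inv one) A m ->
  asdim_le (left_coarse_structure mul inv one) setT m.
Proof.
move=> H cK0 K01 K0s UP Ux hA.
have [r1 ri ii cancel] := grp_r1 H; have [As L1 I _ _] := H.
have UP' := UP; case: UP' => U0 UT UI US UC.
pose E := left_coarse_structure mul inv one.
have [a ha] : exists a : G -> G, forall z, inAK mul A K0 z ->
    A (a z) /\ exists2 k, K0 k & z = mul (a z) k.
  have hex : forall z : G, exists w : G, inAK mul A K0 z ->
      A w /\ exists2 k, K0 k & z = mul w k.
    move=> z; have [[a0 [k [Aa Kk ->]]]|nz] := pselect (inAK mul A K0 z).
      by exists a0 => _; split => //; exists k.
    by exists z.
  by have [f hf] := boolp.choice hex; exists f.
have [a0 Aa0] : exists a0, A a0.
  have [s hs] : exists s, inAK mul A K0 (mul (x s) one).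
    apply: contrapT => hn; apply: U0; apply: US (Ux one) => s hs; apply: hn.
    by exists s.
  by have [h1 _] := ha _ hs; exists (a (mul (x s) one)).
move=> eps [e Ee <-].
have [Ke [cKe Ke1 Kes eKe]] := E_sub Ee.
pose K' := symc inv one (gprod mul K0 (gprod mul Ke K0)).
have EK' : E (entK mul K').
  apply: entK_E => //; rewrite /K'.
  - by apply: (symc_compact H); apply: (gprod_compact H) => //; apply: (gprod_compact H).
  - exact: symc_one.
  - exact: (symc_sym H).
have [UA [UAsub UAcov [delA [eA EeA edelA] meshA] multA]] :=
  hA (entK mul K' `&` (A `*` A)) (ex_intro2 _ _ _ EK' erefl).
have [D [cD D1 Ds eD]] := E_sub EeA.
have [V0 UAV0] : exists V0, UA V0.
  have : A a0 by [].
  by rewrite -UAcov => -[V UAV _]; exists V.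
pose Vf (f : seq G -> set G) :=
  [set p | U [set i | inAK mul A K0 (mul (x i) p) /\ f i (a (mul (x i) p))]].
exists [set V | exists2 f, (forall i, UA (f i)) & Vf f = V]; split.
- by [].
- apply/seteqP; split => // p _.
  have hex : forall i : seq G, exists V, UA V /\
      (inAK mul A K0 (mul (x i) p) -> V (a (mul (x i) p))).
    move=> i; have [hi|ni] := pselect (inAK mul A K0 (mul (x i) p)).
      have [Aai _] := ha _ hi.
      have : A (a (mul (x i) p)) by [].
      by rewrite -UAcov => -[V UAV Vai]; exists V.
    by exists V0.
  have [f hf] := boolp.choice hex.
  exists (Vf f); first by exists f => // i; have [] := hf i.
  rewrite /Vf /=; apply: US (Ux p) => i hi; split => //.
  by have [_ ] := hf i; apply.
- exists (entK mul (symc inv one (gprod mul K0 (gprod mul D K0))) `&` (setT `*` setT)).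
    exists (entK mul (symc inv one (gprod mul K0 (gprod mul D K0)))) => //.
    apply: entK_E => //.
    - by apply: (symc_compact H); apply: (gprod_compact H) => //; apply: (gprod_compact H).
    - exact: symc_one.
    - exact: (symc_sym H).
  move=> [p q] [V [f fUA <-] [/= pV qV]].
  have [i [[hp fp] [hq fq]]] : exists i, (inAK mul A K0 (mul (x i) p) /\
      f i (a (mul (x i) p))) /\ (inAK mul A K0 (mul (x i) q) /\
      f i (a (mul (x i) q))).
    apply: contrapT => hn; apply: U0; apply: US (UI _ _ pV qV) => i hi.
    by apply: hn; exists i.
  have [Aap [k1 K0k1 ep]] := ha _ hp; have [Aaq [k2 K0k2 eq]] := ha _ hq.
  have : delA (a (mul (x i) p), a (mul (x i) q)).
    by apply: meshA; exists (f i) => //.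
  rewrite -edelA => -[/eD [d Dd /= ed] _].
  split => //; exists (mul (inv k2) (mul d k1)).
    by apply: symc_sub; apply: gprodI; [apply: K0s|apply: gprodI].
  exact: (alg2 H ep eq ed).
- move=> p _.
  apply: card_le_fset => B BS.
  rewrite leqNgt; apply/negP => km.
  pose k := #|` B|.
  pose h j := nth set0 (enum_fset B) j.
  have hS : forall j, (j < k)%N -> ((exists2 f, (forall i, UA (f i)) & Vf f = h j)
       /\ h j `&` cball (e `&` (setT `*` setT)) p !=set0).
    by move=> j jk; apply: BS; exact: mem_nth.
  have hex2 : forall j, exists fq : (seq G -> set G) * G, (j < k)%N ->
      [/\ forall i, UA (fq.1 i), Vf fq.1 = h j, h j fq.2 & e (p, fq.2)].
    move=> j; case: (ltnP j k) => jk.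
      have [[f fUA hf] [q [hq [eq _]]]] := hS j jk.
      by exists (f, q) => _; split.
    by exists ((fun _ => V0), p).
  have [FQ hFQ] := boolp.choice hex2.
  pose F j := (FQ j).1; pose Q j := (FQ j).2.
  have Om : U [set i | inAK mul A K0 (mul (x i) p) /\ forall j, (j < k)%N ->
      inAK mul A K0 (mul (x i) (Q j)) /\ F j i (a (mul (x i) (Q j)))].
    apply: (US _ _ _ (UI _ _ (Ux p) (ultra_all (Q := fun j =>
      [set i | inAK mul A K0 (mul (x i) (Q j)) /\ F j i (a (mul (x i) (Q j)))])
      (k := k) UP _))) => //.
    move=> j jk; have [_ hV hq _] := hFQ j jk.
    by move: hq; rewrite -hV.
  have Key : U [set i | exists2 j, (j < k)%N & [set i | exists2 j', (j' < k)%N &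
       [set i | j != j' /\ F j i = F j' i] i] i].
    apply: US Om => i [hp hj]; apply: contrapT => hn.
    have [Aap [k1 K0k1 ep]] := ha _ hp.
    have : (k <= m.+1)%N.
      apply: (@card_le_inj _ _ _ (fun j => F j i) k (multA _ Aap)).
        move=> j j' /= jk j'k eqF; apply/eqP; apply: contrapT => nj; apply: hn.
        exists j; first by move: jk; rewrite in_setE.
        exists j'; first by move: j'k; rewrite in_setE.
        by split => //; apply/negP.
      move=> j jk; have [hq fq] := hj j jk; have [Aaq [k2 K0k2 eq]] := ha _ hq.
      have [fUA _ _ epq] := hFQ j jk.
      split; first exact: fUA.
      exists (a (mul (x i) (Q j))); split => //; split; last by split.
      have [kk Kekk epk] := eKe _ epq.
      exists (mul k2 (mul kk (inv k1))).
        by apply: symc_sub; apply: gprodI => //; apply: gprodI => //; apply: K0s.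
      exact: (alg1 H ep eq epk).
    by rewrite leqNgt km.
  have [j jk Uj] := ultra_pick UP Key.
  have [j' j'k Uj'] := ultra_pick (Q := fun j' => [set i | j != j' /\ F j i = F j' i]) UP Uj.
  have [i0 [njj _]] : exists i, j != j' /\ F j i = F j' i.
    by apply: contrapT => hn; apply: U0; apply: US Uj' => i hi; apply: hn; exists i.
  have eqV : Vf (F j) = Vf (F j').
    apply/seteqP; split => z /= hz; apply: US (UI _ _ hz Uj') => i [[h1 h2] [_ h3]];
      split => //; by [rewrite -h3 | rewrite h3].
  have [_ hVj _ _] := hFQ j jk; have [_ hVj' _ _] := hFQ j' j'k.
  have : h j = h j' by rewrite -hVj -hVj' -/(F j) -/(F j') eqV.
  rewrite /h => /eqP; rewrite nth_uniq //; first by rewrite (negbTE njj).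
  exact: fset_uniq.
Qed.

Lemma asdim_Some (X : Type) (E : set (set (X * X))) (A : set X) m :
  asdim E A = Some m -> asdim_le E A m.
Proof.
rewrite /asdim; case: pselect => // h.
case: ex_minnP => n /asboolP hn _ [<-]; exact: hn.
Qed.

Lemma asdim_le_Some (X : Type) (E : set (set (X * X))) (A : set X) m :
  asdim_le E A m -> exists m', asdim E A = Some m' /\ (m' <= m)%N.
Proof.
move=> hm; rewrite /asdim; case: pselect => [h|nh]; last first.
  by exfalso; apply: nh; exists m.
case: ex_minnP => n _ hmin; exists n; split => //.
by apply: hmin; apply/asboolP.
Qed.

Lemma list_compact (G : topologicalType) (s : seq G) :
  compact [set p | List.In p s].
Proof.
elim: s => [|a s IH].
  have -> : [set p | @List.In G p [::]] = set0 by apply/seteqP; split.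
  exact: compact0.
have -> : [set p | List.In p (a :: s)] = [set a] `|` [set p | List.In p s].
  apply/seteqP; split => p /=.
  - by case=> [->|hp]; [left|right].
  - by case=> [->|hp]; [left|right].
apply: compactU => //; exact: compact_set1.
Qed.

Theorem theorem1p6 (G : topologicalType) (mul : G -> G -> G) (inv : G -> G)
    (one : G) :
  is_topological_group mul inv one ->
  D_lt (left_coarse_structure mul inv one) `<=`
  small_sets (left_coarse_structure mul inv one).
Proof.
move=> H A DA L [eps0 Eeps0 Lbig]; apply: contrapT => nl.
have [K0 [cK0 K01 K0s e0K]] := E_sub Eeps0.
have tr := nonsmall_translate H cK0 K0s e0K Lbig nl.
have hx : forall s : seq G, exists x, forall p, List.In p s ->
    inAK mul A K0 (mul x p).
  move=> s; have [x hx] := tr _ (@list_compact G s); exists x => p hp.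
  by have [a' [k [Aa Kk e]]] := hx p hp; exists a', k.
have [x hxs] := boolp.choice hx.
have [U [UP Ub]] := ultra_exists G.
have UP' := UP; case: UP' => _ _ _ US _.
have Ux : forall p, U [set s | inAK mul A K0 (mul (x s) p)].
  by move=> p; apply: US (Ub p) => s hs; apply: hxs.
move: DA; rewrite /D_lt /=; case eA: (asdim _ A) => [m|] //=.
have hA := asdim_Some eA.
have hX := main_glue H cK0 K01 K0s UP Ux hA.
have [m' [-> le]] := asdim_le_Some hX.
by rewrite /= ltnNge le.
Qed.
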